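(* For each $k\in\mathbb{N}$ there is a graph of treewidth at most $k$ that contains every graph of treewidth at most $k$ as an induced subgraph.
   Context: All graphs are simple and countable. Treewidth is defined via tree-decompositions (bags indexed by a tree, each edge contained in a bag, each vertex's bags forming a nonempty subtree; width = maximum bag size minus one; treewidth = minimum width). *)

(* Defs.v *)
From Stdlib Require Import List Arith.
Import ListNotations.

Record graph : Type := Graph {
  vert :> Type;
  adj : vert -> vert -> Prop;
  adj_sym : forall x y, adj x y -> adj y x;
  adj_irrefl : forall x, ~ adj x x;
  countable : exists f : vert -> nat, forall x y, f x = f y -> x = y
}.

Arguments adj {g} _ _.

(* walk G x l y : x = v0, v1, ..., vn = y with l = [v1; ...; vn]. *)
Inductive walk (G : graph) : G -> list G -> G -> Prop :=
  | walk_nil : forall x, walk G x [] x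
  | walk_cons : forall x z l y, adj x z -> walk G z l y -> walk G x (z :: l) y.

Definition connected_set (G : graph) (S : G -> Prop) : Prop :=
  forall x y, S x -> S y -> exists l, walk G x l y /\ Forall S l.

(* A cycle: a closed walk x v1 ... vn (vn = x) with n >= 3 distinct vertices. *)
Definition has_cycle (G : graph) : Prop :=
  exists (x : G) (l : list G), walk G x l x /\ 3 <= length l /\ NoDup l.

Definition is_tree (T : graph) : Prop :=
  inhabited T /\ connected_set T (fun _ => True) /\ ~ has_cycle T.

Definition tree_decomposition (G T : graph) (B : T -> G -> Prop) : Prop :=
  is_tree T /\
  (forall u v : G, adj u v -> exists t, B t u /\ B t v) /\
  (forall v : G, (exists t, B t v) /\ connected_set T (fun t => B t v)).

Definition width_le (G T : graph) (B : T -> G -> Prop) (k : nat) : Prop :=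
  forall t : T, exists l : list G, length l <= k + 1 /\ forall v, B t v -> In v l.

Definition treewidth_le (G : graph) (k : nat) : Prop :=
  exists (T : graph) (B : T -> G -> Prop), tree_decomposition G T B /\ width_le G T B k.

Definition induced_subgraph (H G : graph) : Prop :=
  exists f : H -> G, (forall x y, f x = f y -> x = y) /\
                     (forall x y, adj x y <-> adj (f x) (f y)).

(* Main.v *)
Require Import Defs.
From Stdlib Require Import List Arith Lia Permutation Classical ClassicalEpsilon.
Import ListNotations.
From mathcomp Require ssreflect ssrfun ssrbool eqtype choice seq.

Module CountAux.
Import ssreflect ssrfun ssrbool eqtype choice seq.
Lemma pk (A : countType) : exists f : A -> nat, forall x y, f x = f y -> x = y.
Proof. exists pickle. intros x y H. exact (pcan_inj (@pickleK _) H). Qed.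
Definition Step := (seq nat * seq nat * nat)%type.
Lemma pk1 : exists f : (Step * seq Step) -> nat, forall x y, f x = f y -> x = y.
Proof. exact (pk _). Qed.
Lemma pk2 : exists f : (seq Step) -> nat, forall x y, f x = f y -> x = y.
Proof. exact (pk _). Qed.
End CountAux.

Definition Step := (list nat * list nat * nat)%type.
Definition UV := (Step * list Step)%type.

Lemma walk_app (G : graph) x l1 y l2 z :
  walk G x l1 y -> walk G y l2 z -> walk G x (l1 ++ l2) z.
Proof. intros H; induction H; intros; simpl; auto. econstructor; eauto. Qed.

Lemma walk_rev (G : graph) x l y :
  walk G x l y -> exists l', walk G y l' x /\ y :: l' = rev (x :: l).
Proof.
  intros H; induction H.
  - exists []. split; [constructor | reflexivity].
  - destruct IHwalk as [l' [Hw He]]. exists (l' ++ [x]). split.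
    + apply walk_app with z; auto. econstructor; [apply adj_sym; exact H | constructor].
    + change (rev (x :: z :: l)) with (rev (z :: l) ++ [x]). rewrite <- He. reflexivity.
Qed.

Lemma walk_split_mid (G : graph) l1 m l2 x y :
  walk G x (l1 ++ m :: l2) y -> walk G x (l1 ++ [m]) m /\ walk G m l2 y.
Proof.
  revert x; induction l1 as [|a l1 IH]; intros x H; simpl in *.
  - inversion H; subst. split; auto. econstructor; eauto. constructor.
  - inversion H; subst. destruct (IH _ H5). split; auto. econstructor; eauto.
Qed.

Lemma max_in (A : Type) (d : A -> nat) (l : list A) :
  l <> [] -> exists m, In m l /\ forall z, In z l -> d z <= d m.
Proof.
  induction l as [|a l IH]; intros Hne; [congruence|].
  destruct l as [|b l'].
  - exists a. split; [left; auto|]. intros z [<-|[]]; auto.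
  - destruct IH as [m [Hm Hmax]]; [congruence|].
    destruct (le_lt_dec (d a) (d m)).
    + exists m. split; [right; auto|]. intros z [<-|Hz]; auto.
    + exists a. split; [left; auto|]. intros z [<-|Hz]; auto.
      specialize (Hmax z Hz). lia.
Qed.

Lemma parent_acyclic (G : graph) (p : G -> G) (d : G -> nat) :
  (forall a b, adj a b -> (p a = b /\ d a = S (d b)) \/ (p b = a /\ d b = S (d a))) ->
  ~ has_cycle G.
Proof.
  intros HE [x [l [Hw [Hlen Hnd]]]].
  destruct (max_in _ d l) as [m [Hm Hmax]]; [intro; subst; simpl in Hlen; lia|].
  destruct (in_split _ _ Hm) as [l1 [l2 Hl]]. subst l.
  destruct (walk_split_mid _ _ _ _ _ _ Hw) as [W1 W2].
  assert (W : walk G m (l2 ++ l1 ++ [m]) m).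
  { apply walk_app with x; auto. }
  assert (HP : Permutation (l1 ++ m :: l2) ((l2 ++ l1) ++ [m])).
  { apply Permutation_trans with ((m :: l2) ++ l1); [apply Permutation_app_comm|].
    simpl. apply Permutation_cons_append. }
  assert (Hnd2 : NoDup ((l2 ++ l1) ++ [m])) by (exact (Permutation_NoDup HP Hnd)).
  assert (Hlen2 : 2 <= length (l2 ++ l1)).
  { apply Permutation_length in HP. rewrite !length_app in HP, Hlen. simpl in HP, Hlen. rewrite !length_app. lia. }
  destruct (exists_last (l := l2 ++ l1)) as [A0 [u HA]]; [intro He; rewrite He in Hlen2; simpl in Hlen2; lia|].
  destruct A0 as [|v1 B0].
  { rewrite HA in Hlen2. simpl in Hlen2. lia. }
  rewrite app_assoc in W. rewrite HA in W, Hnd2.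
  assert (Hin : forall z, In z (l2 ++ l1) -> In z (l1 ++ m :: l2)).
  { intros z Hz. apply Permutation_in with ((l2 ++ l1) ++ [m]);
      [apply Permutation_sym; auto | apply in_or_app; auto]. }
  assert (Hv1 : d v1 <= d m) by (apply Hmax, Hin; rewrite HA; left; auto).
  assert (Hu : d u <= d m) by (apply Hmax, Hin; rewrite HA; apply in_or_app; right; left; auto).
  rewrite <- app_assoc in W. simpl in W.
  inversion W; subst.
  assert (Wu := walk_split_mid _ (v1 :: B0) u [m] _ _ W).
  destruct Wu as [_ Wu]. inversion Wu; subst.
  destruct (HE _ _ H2) as [[E1 _]|[_ E2]]; [|lia].
  destruct (HE _ _ H3) as [[_ E3]|[E4 _]]; [lia|].
  rewrite <- !app_assoc in Hnd2. simpl in Hnd2. inversion Hnd2 as [|? ? Hni].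
  apply Hni. rewrite <- E1, E4. apply in_or_app. right. left. reflexivity.
Qed.

Fixpoint sel {A : Type} (idx : list nat) (l : list A) : list A :=
  match idx with
  | [] => []
  | i :: idx' => match nth_error l i with
                 | Some x => x :: sel idx' l
                 | None => sel idx' l
                 end
  end.

Lemma sel_In {A} idx (l : list A) x : In x (sel idx l) -> In x l.
Proof.
  induction idx as [|i idx IH]; simpl; [tauto|].
  destruct (nth_error l i) eqn:E; auto.
  intros [<-|H]; auto. eapply nth_error_In; eauto.
Qed.

Lemma sel_map {A B} (f : A -> B) idx l : sel idx (map f l) = map f (sel idx l).
Proof.
  induction idx as [|i idx IH]; simpl; auto.
  rewrite nth_error_map. destruct (nth_error l i); simpl; rewrite IH; auto.
Qed.

Lemma firstn_In' {A} n (l : list A) x : In x (firstn n l) -> In x l.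
Proof.
  intros H. rewrite <- (firstn_skipn n l). apply in_or_app. auto.
Qed.

Fixpoint bagl (k : nat) (w : list Step) : list UV :=
  match w with
  | [] => []
  | c :: w' => (c, w') :: firstn k (sel (fst (fst c)) (bagl k w'))
  end.

Definition RU (k : nat) (x y : UV) : Prop :=
  In y (sel (snd (fst (fst x))) (firstn k (sel (fst (fst (fst x))) (bagl k (snd x))))).

Definition adjU (k : nat) (x y : UV) : Prop := x <> y /\ (RU k x y \/ RU k y x).

Lemma adjU_sym k x y : adjU k x y -> adjU k y x.
Proof. intros [H1 H2]. split; [auto|tauto]. Qed.
Lemma adjU_irrefl k x : ~ adjU k x x.
Proof. intros [H _]; auto. Qed.

Definition UG (k : nat) : graph :=
  Graph UV (adjU k) (adjU_sym k) (adjU_irrefl k) CountAux.pk1.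

Definition adjT (w w' : list Step) : Prop :=
  (exists c, w' = c :: w) \/ (exists c, w = c :: w').

Lemma adjT_sym x y : adjT x y -> adjT y x.
Proof. unfold adjT; tauto. Qed.
Lemma adjT_irrefl x : ~ adjT x x.
Proof.
  intros [[c H]|[c H]]; apply (f_equal (@length Step)) in H; simpl in H; lia.
Qed.

Definition TU : graph := Graph (list Step) adjT adjT_sym adjT_irrefl CountAux.pk2.

Lemma TU_acyclic : ~ has_cycle TU.
Proof.
  apply (parent_acyclic TU (@tl Step) (@length Step)).
  intros a b [[c H]|[c H]]; subst; simpl; auto.
Qed.

Lemma TU_walk_root (w : TU) : exists l, walk TU w l ([] : TU).
Proof.
  induction w as [|c w IH].
  - exists []. constructor.
  - destruct IH as [l Hl]. exists ((w : TU) :: l). econstructor; eauto.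
    right. exists c. reflexivity.
Qed.

Lemma TU_tree : is_tree TU.
Proof.
  split; [constructor; exact ([] : list Step)|]. split; [|exact TU_acyclic].
  intros x y _ _.
  destruct (TU_walk_root x) as [l1 H1]. destruct (TU_walk_root y) as [l2 H2].
  destruct (walk_rev _ _ _ _ H2) as [l2' [H2' _]].
  exists (l1 ++ l2'). split; [eapply walk_app; eauto|].
  apply Forall_forall; auto.
Qed.

Definition BU (k : nat) (w : TU) (x : UG k) : Prop := In x (bagl k w).

Lemma BU_up k (x : UV) (v : list Step) :
  In x (bagl k v) ->
  exists l, walk TU v l (fst x :: snd x) /\ Forall (fun u => In x (bagl k u)) l.
Proof.
  induction v as [|e u IH]; intros Hx; simpl in Hx; [destruct Hx|].
  destruct Hx as [Hx0|Hin].
  - subst x. simpl. exists []. split; constructor.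
  - apply firstn_In' in Hin. apply sel_In in Hin. destruct (IH Hin) as [l [Hw Hf]].
    exists ((u : TU) :: l). split; [econstructor; eauto; right; exists e; auto|].
    constructor; auto.
Qed.

Lemma U_tw (k : nat) : treewidth_le (UG k) k.
Proof.
  exists TU, (BU k). split; [split; [exact TU_tree|split]|].
  - intros u v [_ [H|H]].
    + exists (fst u :: snd u). unfold BU. destruct u as [c w]. simpl. split; [left; auto|].
      right. unfold RU in H. simpl in H. apply sel_In in H. exact H.
    + exists (fst v :: snd v). unfold BU. destruct v as [c w]. simpl. split; [|left; auto].
      right. unfold RU in H. simpl in H. apply sel_In in H. exact H.
  - intros x. split.
    + exists (fst x :: snd x). unfold BU. destruct x; simpl; left; auto.
    + intros v1 v2 H1 H2.
      destruct (BU_up k x v1 H1) as [l1 [W1 F1]].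
      destruct (BU_up k x v2 H2) as [l2 [W2 F2]].
      destruct (walk_rev _ _ _ _ W2) as [l2' [W2' E2]].
      exists (l1 ++ l2'). split; [eapply walk_app; eauto|].
      apply Forall_app; split; auto.
      apply Forall_forall. intros z Hz.
      assert (Hz' : In z (rev ((v2 : TU) :: l2))) by (rewrite <- E2; right; auto).
      apply in_rev in Hz'. destruct Hz' as [<-|Hz']; auto.
      rewrite Forall_forall in F2. apply F2; auto.
  - unfold width_le. intros w.
  exists (bagl k w). split; [|unfold BU; auto].
    destruct w as [|c w]; simpl; [lia|]. rewrite firstn_length. lia.
Qed.


Lemma nat_min (P : nat -> Prop) :
  (exists n, P n) -> exists n, P n /\ forall m, P m -> n <= m.
Proof.
  intros [n Hn]. apply NNPP. intros Hno.
  assert (forall m, forall j, j <= m -> ~ P j).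
  { induction m as [|m IH]; intros j Hj Pj.
    - apply Hno. exists j. split; auto. intros; lia.
    - apply Hno. exists j. split; auto. intros i Pi.
      destruct (le_lt_dec j i); auto. exfalso. apply (IH i); auto. lia. }
  apply (H n n); auto.
Qed.

Section Embed.
Variable k : nat.
Variables H T : graph.
Variable B : T -> H -> Prop.
Hypothesis HTD : tree_decomposition H T B.
Hypothesis HW : width_le H T B k.
Variable hH : H -> nat.
Hypothesis hHinj : forall x y, hH x = hH y -> x = y.

Definition inhT : inhabited T := proj1 (proj1 HTD).
Lemma conT : connected_set T (fun _ => True).
Proof. exact (proj1 (proj2 (proj1 HTD))). Qed.
Lemma acycT : ~ has_cycle T.
Proof. exact (proj2 (proj2 (proj1 HTD))). Qed.

Definition r : T := epsilon inhT (fun _ => True).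

Definition distP (t : T) (n : nat) : Prop := exists l, walk T r l t /\ length l = n.

Definition dist (t : T) : nat :=
  epsilon (inhabits 0) (fun n => distP t n /\ forall m, distP t m -> n <= m).

Lemma dist_spec t : distP t (dist t) /\ forall l, walk T r l t -> dist t <= length l.
Proof.
  assert (E : exists n, distP t n /\ forall m, distP t m -> n <= m).
  { apply nat_min. destruct (conT r t I I) as [l [Hl _]]. exists (length l), l; auto. }
  destruct (epsilon_spec (inhabits 0) _ E) as [H1 H2]. fold (dist t) in H1, H2.
  split; auto. intros l Hl. apply H2. exists l; auto.
Qed.

Lemma dist_r : dist r = 0.
Proof. pose proof (proj2 (dist_spec r) [] (walk_nil _ _)). simpl in H0. lia. Qed.

Lemma dist0 t : dist t = 0 -> t = r.
Proof.
  intros E. destruct (proj1 (dist_spec t)) as [l [Hl Hlen]]. rewrite E in Hlen.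
  destruct l; [|discriminate]. inversion Hl; auto.
Qed.

Lemma walk_last (G : graph) x l y : walk G x l y -> l <> [] ->
  exists l' u, walk G x l' u /\ adj u y /\ S (length l') = length l.
Proof.
  intros W; induction W; intros Hne; [congruence|].
  destruct l as [|a l].
  - inversion W; subst. exists [], x. repeat split; auto. constructor.
  - destruct IHW as [l' [u [W' [A L]]]]; [congruence|].
    exists (z :: l'), u. repeat split; auto. econstructor; eauto. simpl. simpl in L. lia.
Qed.

Lemma adj_dist a b : adj a b -> dist b <= S (dist a).
Proof.
  intros A. destruct (proj1 (dist_spec a)) as [l [Hl Hlen]].
  pose proof (proj2 (dist_spec b) (l ++ [b])) as HH.
  rewrite length_app in HH. simpl in HH. rewrite Hlen in HH. rewrite <- Nat.add_1_r. apply HH.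
  apply walk_app with a; auto. econstructor; eauto. constructor.
Qed.

Definition parP (t u : T) : Prop := (t = r /\ u = r) \/ (t <> r /\ adj t u /\ S (dist u) = dist t).

Definition par (t : T) : T := epsilon inhT (parP t).

Lemma par_spec t : parP t (par t).
Proof.
  unfold par. apply (epsilon_spec inhT (parP t)).
  destruct (classic (t = r)) as [E|E]; [exists r; left; auto|].
  destruct (proj1 (dist_spec t)) as [l [Hl Hlen]].
  destruct (walk_last _ _ _ _ Hl) as [l' [u [W [A L]]]].
  { intro; subst l. inversion Hl; subst. auto. }
  exists u. right. split; auto. split; [apply adj_sym; auto|].
  pose proof (proj2 (dist_spec u) l' W). pose proof (adj_dist _ _ A). lia.
Qed.

Lemma par_r : par r = r.
Proof. destruct (par_spec r) as [[_ E]|[E _]]; auto. congruence. Qed.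

Lemma par_adj t : t <> r -> adj t (par t).
Proof. intros Ht. destruct (par_spec t) as [[E _]|[_ [A _]]]; auto. congruence. Qed.

Lemma dist_par t : dist (par t) = dist t - 1.
Proof.
  destruct (par_spec t) as [[E1 E2]|[_ [_ E]]].
  - rewrite E2, E1, dist_r. auto.
  - lia.
Qed.

Lemma dist_pos t : t <> r -> 0 < dist t.
Proof. intros Ht. destruct (dist t) eqn:E; [|lia]. apply dist0 in E. congruence. Qed.

Fixpoint up (n : nat) (t : T) : T :=
  match n with 0 => t | S n => up n (par t) end.

Lemma up_S n t : up (S n) t = par (up n t).
Proof. revert t; induction n; intros t; simpl; auto. rewrite <- IHn. reflexivity. Qed.

Lemma dist_up n t : dist (up n t) = dist t - n.
Proof.
  revert t; induction n; intros t; simpl; [lia|]. rewrite IHn, dist_par. lia.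
Qed.

Lemma up_root n t : dist t <= n -> up n t = r.
Proof. intros Hn. apply dist0. rewrite dist_up. lia. Qed.

Lemma up_adj n t : n < dist t -> adj (up n t) (up (S n) t).
Proof.
  intros Hn. rewrite up_S. apply par_adj. intro E.
  pose proof (dist_up n t). rewrite E, dist_r in H0. lia.
Qed.

Lemma up_inj t i j : i <= dist t -> j <= dist t -> up i t = up j t -> i = j.
Proof.
  intros Hi Hj E. pose proof (dist_up i t). pose proof (dist_up j t).
  rewrite E in H0. lia.
Qed.

Lemma upwalk n t : n <= dist t -> walk T t (map (fun m => up m t) (seq 1 n)) (up n t).
Proof.
  induction n as [|n IH]; intros Hn; [constructor|].
  rewrite seq_S, map_app. apply walk_app with (up n t); [apply IH; lia|].
  simpl. econstructor; [apply up_adj; lia|constructor].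
Qed.

Lemma downwalk n t : n <= dist t -> walk T (up n t) (map (fun m => up m t) (rev (seq 0 n))) t.
Proof.
  induction n as [|n IH]; intros Hn; [constructor|].
  rewrite seq_S, rev_app_distr. simpl.
  econstructor; [apply adj_sym, up_adj; lia|]. apply IH. lia.
Qed.

Lemma NoDup_map_in {A C} (f : A -> C) (s : list A) :
  (forall x y, In x s -> In y s -> f x = f y -> x = y) -> NoDup s -> NoDup (map f s).
Proof.
  induction s as [|a s IH]; intros Hi Hn; simpl; constructor.
  - intros Hin. apply in_map_iff in Hin. destruct Hin as [x [Ex Hx]].
    inversion Hn; subst. assert (x = a) by (apply Hi; simpl; auto). subst; auto.
  - inversion Hn; subst. apply IH; auto. intros; apply Hi; simpl; auto.
Qed.

Lemma edge_par a b : adj a b -> par a = b \/ par b = a.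
Proof.
  intros A. apply NNPP. intros Hn.
  assert (Hab : par a <> b /\ par b <> a) by tauto. clear Hn. destruct Hab as [Na Nb].
  destruct (nat_min (fun s => exists i j, i + j = s /\ up i a = up j b)) as [s [[i [j [Es Eij]]] Hmin]].
  { exists (dist a + dist b), (dist a), (dist b). split; auto. rewrite !up_root; auto. }
  assert (Hia : i <= dist a).
  { destruct (le_lt_dec i (dist a)); auto. exfalso.
    assert (dist a + j >= s) by (apply Hmin; exists (dist a), j; split; auto;
      rewrite <- Eij, !up_root; auto; lia). lia. }
  assert (Hjb : j <= dist b).
  { destruct (le_lt_dec j (dist b)); auto. exfalso.
    assert (i + dist b >= s) by (apply Hmin; exists i, (dist b); split; auto;
      rewrite Eij, !up_root; auto; lia). lia. }
  pose proof (adj_dist _ _ A) as D1. pose proof (adj_dist _ _ (adj_sym _ _ _ A)) as D2.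
  assert (Hi1 : 1 <= i).
  { destruct i; [|lia]. exfalso. simpl in Eij. destruct j.
    - simpl in Eij. subst. apply (adj_irrefl _ _ A).
    - pose proof (dist_up (S j) b). rewrite <- Eij in H0.
      destruct j.
      + simpl in Eij. apply Nb. auto.
      + lia. }
  assert (Hj1 : 1 <= j).
  { destruct j; [|lia]. exfalso. simpl in Eij.
    pose proof (dist_up i a). rewrite Eij in H0.
    destruct i as [|[|i]]; [lia| |lia]. simpl in Eij. apply Na. auto. }
  set (c := up i a).
  set (L := map (fun m => up m a) (rev (seq 0 i)) ++ b :: map (fun m => up m b) (seq 1 j)).
  apply acycT. exists c, L. split; [|split].
  - unfold L. apply walk_app with a; [apply downwalk; auto|].
    econstructor; eauto. unfold c. rewrite Eij. apply upwalk; auto.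
  - unfold L. rewrite length_app, !length_map, length_rev, !length_seq. simpl. rewrite length_map, length_seq. lia.
  - apply Permutation_NoDup with (map (fun m => up m a) (seq 0 i) ++ map (fun m => up m b) (seq 0 (S j))).
    { unfold L. apply Permutation_app; [|reflexivity].
      rewrite map_rev. apply Permutation_rev. }
    apply NoDup_app.
    + apply NoDup_map_in; [|apply seq_NoDup].
      intros x y Hx Hy. apply in_seq in Hx, Hy. apply up_inj; lia.
    + apply NoDup_map_in; [|apply seq_NoDup].
      intros x y Hx Hy. apply in_seq in Hx, Hy. apply up_inj; lia.
    + intros z Hz1 Hz2. apply in_map_iff in Hz1, Hz2.
      destruct Hz1 as [m [E1 Hm]]. destruct Hz2 as [m' [E2 Hm']].
      apply in_seq in Hm, Hm'.
      destruct (Nat.eq_dec m' j).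
      * subst m'. rewrite <- E2, <- Eij in E1. apply up_inj in E1; lia.
      * assert (m + m' >= s) by (apply Hmin; exists m, m'; split; auto; congruence). lia.
Qed.

Lemma bagsT v : (exists t, B t v) /\ connected_set T (fun t => B t v).
Proof. exact (proj2 (proj2 HTD) v). Qed.

Definition topP (v : H) (t : T) : Prop := B t v /\ forall t', B t' v -> dist t <= dist t'.
Definition top (v : H) : T := epsilon inhT (topP v).

Lemma top_spec v : topP v (top v).
Proof.
  unfold top. apply (epsilon_spec inhT (topP v)).
  destruct (nat_min (fun n => exists t, B t v /\ dist t = n)) as [n [[t [Ht Et]] Hm]].
  { destruct (proj1 (bagsT v)) as [t Ht]. exists (dist t), t; auto. }
  exists t. split; auto. intros t' Ht'. subst. apply Hm. exists t'; auto.
Qed.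

Lemma top_in v : B (top v) v.
Proof. exact (proj1 (top_spec v)). Qed.
Lemma top_min v t : B t v -> dist (top v) <= dist t.
Proof. exact (proj2 (top_spec v) t). Qed.

Definition desc (t a : T) : Prop := exists n, up n a = t.

Lemma escape (P : T -> Prop) t a l y :
  walk T a l y -> desc t a -> ~ desc t y -> Forall P l -> P (par t).
Proof.
  intros W; induction W as [x|x z l y A W IH]; intros Da Dy F; [contradiction|].
  inversion F as [|? ? Sz Fl]; subst.
  destruct (classic (desc t z)) as [Dz|Dz]; [apply IH; auto|].
  destruct (edge_par _ _ A) as [E|E].
  - destruct Da as [[|n] Hn]; simpl in Hn.
    + subst. auto.
    + exfalso. apply Dz. exists n. rewrite <- E. auto.
  - exfalso. apply Dz. destruct Da as [n Hn]. exists (S n). simpl. rewrite E. auto.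
Qed.

Lemma Qup v t : B t v -> t <> top v -> B (par t) v.
Proof.
  intros Bt Nt. destruct (proj2 (bagsT v) t (top v) Bt (top_in v)) as [l [W F]].
  apply (escape (fun t => B t v) t t l (top v)); auto.
  - exists 0; auto.
  - intros [n Hn]. destruct n as [|n]; [simpl in Hn; auto|].
    pose proof (dist_up (S n) (top v)). rewrite Hn in H0.
    pose proof (top_min v t Bt).
    assert (dist (top v) = 0) by lia. apply dist0 in H2.
    apply Nt. rewrite <- Hn, H2. apply up_root. rewrite dist_r; lia.
Qed.

Lemma top_up v : forall n s, dist s <= n -> B s v -> exists a, up a s = top v.
Proof.
  induction n as [|n IH]; intros s Hs Bs;
    (destruct (classic (s = top v)) as [E|E]; [exists 0; auto|]).
  - exfalso. assert (s = r) by (apply dist0; lia). pose proof (top_min v s Bs).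
    subst s. rewrite dist_r in H1. assert (top v = r) by (apply dist0; lia). auto.
  - destruct (IH (par s)) as [a Ha]; [rewrite dist_par; lia| apply Qup; auto|].
    exists (S a). auto.
Qed.

Lemma top_up' v s : B s v -> exists a, up a s = top v.
Proof. intros; eapply top_up; eauto. Qed.

Lemma above_in v s b : B s v -> up b s = top v -> forall j, j <= b -> B (up j s) v.
Proof.
  intros Bs Eb j. induction j as [|j IH]; intros Hj; auto.
  rewrite up_S. specialize (IH ltac:(lia)).
  destruct (classic (up j s = top v)) as [E|E]; [|apply Qup; auto].
  rewrite <- Eb in E. pose proof (dist_up j s). pose proof (dist_up b s).
  assert (dist (up j s) = 0) by (rewrite E; rewrite E in H0; lia).
  apply dist0 in H2. rewrite H2, par_r. rewrite <- H2. auto.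
Qed.


Definition Hdec (x y : H) : {x = y} + {x <> y} := excluded_middle_informative (x = y).
Definition dec (P : Prop) : bool := if excluded_middle_informative P then true else false.
Lemma dec_true P : dec P = true <-> P.
Proof. unfold dec. destruct (excluded_middle_informative P); split; auto; discriminate. Qed.

Definition lw (t : T) : list H :=
  epsilon (inhabits []) (fun l => length l <= S k /\ forall v, B t v -> In v l).
Lemma lw_spec t : length (lw t) <= S k /\ forall v, B t v -> In v (lw t).
Proof.
  unfold lw. apply (epsilon_spec (inhabits []) (fun l => length l <= S k /\ forall v, B t v -> In v l)).
  destruct (HW t) as [l [L I]]. exists l. split; auto. lia.
Qed.

Definition Lt (t : T) : list H := nodup Hdec (filter (fun x => dec (B t x)) (lw t)).

Lemma Lt_In t x : In x (Lt t) <-> B t x.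
Proof.
  unfold Lt. rewrite nodup_In, filter_In, dec_true. split; [tauto|].
  intros Hb. split; auto. apply (proj2 (lw_spec t)); auto.
Qed.
Lemma Lt_NoDup t : NoDup (Lt t).
Proof. apply NoDup_nodup. Qed.
Lemma Lt_len t : length (Lt t) <= S k.
Proof.
  eapply Nat.le_trans; [|exact (proj1 (lw_spec t))].
  apply NoDup_incl_length; [apply Lt_NoDup|].
  intros x Hx. apply Lt_In in Hx. apply (proj2 (lw_spec t)); auto.
Qed.

Definition before (t : T) (y x : H) : Prop := exists pre rest, Lt t = pre ++ x :: rest /\ In y pre.

Definition tau (t : T) (x : H) : list H :=
  filter (fun y => dec (top y <> t \/ before t y x)) (Lt t).

Lemma tau_In t x y : In y (tau t x) <-> B t y /\ (top y <> t \/ before t y x).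
Proof. unfold tau. rewrite filter_In, dec_true, Lt_In. tauto. Qed.

Lemma split_uniq {A} (pre pre' rest rest' : list A) x :
  NoDup (pre ++ x :: rest) -> pre ++ x :: rest = pre' ++ x :: rest' -> pre = pre'.
Proof.
  revert pre'; induction pre as [|a pre IH]; intros pre' Nd E; destruct pre' as [|a' pre']; auto.
  - simpl in E, Nd. injection E as Ea Er. apply NoDup_cons_iff in Nd. exfalso. apply (proj1 Nd).
    rewrite Er. apply in_or_app. right. left. auto.
  - simpl in E, Nd. injection E as Ea Er. apply NoDup_cons_iff in Nd. exfalso. apply (proj1 Nd).
    rewrite Ea. apply in_or_app. right. left. auto.
  - simpl in E, Nd. injection E as Ea Er. subst. f_equal. apply (IH pre'); auto.
    apply NoDup_cons_iff in Nd. tauto.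
Qed.

Lemma before_iff t pre x rest y : Lt t = pre ++ x :: rest -> (before t y x <-> In y pre).
Proof.
  intros E. split.
  - intros [pre' [rest' [E' Hy]]]. rewrite E in E'.
    assert (pre = pre'). { eapply split_uniq; [|exact E']. rewrite <- E. apply Lt_NoDup. }
    subst; auto.
  - intros Hy. exists pre, rest. auto.
Qed.

Definition pos (s : list H) (x : H) : nat := epsilon (inhabits 0) (fun i => nth_error s i = Some x).

Lemma sel_pos s tt : (forall y, In y tt -> In y s) -> sel (map (pos s) tt) s = tt.
Proof.
  induction tt as [|a tt IH]; intros Hs; simpl; auto.
  assert (E : nth_error s (pos s a) = Some a).
  { unfold pos. apply (epsilon_spec (inhabits 0) (fun i => nth_error s i = Some a)).
    apply In_nth_error. apply Hs. left; auto. }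
  rewrite E, IH; auto. intros; apply Hs; right; auto.
Qed.

Definition adjb (x y : H) : bool := dec (adj x y).

Definition mk (s tt : list H) (x : H) : Step :=
  (map (pos s) tt, map (pos tt) (filter (adjb x) tt), hH x).

Definition stepf (t : T) (st : list Step * list H) (x : H) : list Step * list H :=
  if excluded_middle_informative (top x = t)
  then (mk (snd st) (tau t x) x :: fst st, x :: tau t x) else st.

Fixpoint FoldAll (n : nat) (t : T) : list Step * list H :=
  match n with
  | 0 => fold_left (stepf t) (Lt t) ([], [])
  | S n => fold_left (stepf t) (Lt t) (FoldAll n (par t))
  end.

Definition Start (t : T) : list Step * list H :=
  match dist t with 0 => ([], []) | S n => FoldAll n (par t) end.
Definition Fin (t : T) : list Step * list H := fold_left (stepf t) (Lt t) (Start t).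

Lemma Start_r : Start r = ([], []).
Proof. unfold Start. rewrite dist_r. auto. Qed.

Lemma Start_par t : t <> r -> Start t = Fin (par t).
Proof.
  intros Ht. pose proof (dist_pos t Ht). pose proof (dist_par t).
  unfold Start at 1. destruct (dist t) as [|n] eqn:E; [lia|].
  unfold Fin, Start. replace (dist (par t)) with n by lia.
  destruct n; reflexivity.
Qed.

Definition prefix (t : T) (x : H) : list H :=
  epsilon (inhabits []) (fun pre => exists rest, Lt t = pre ++ x :: rest).

Lemma prefix_eq t pre x rest : Lt t = pre ++ x :: rest -> prefix t x = pre.
Proof.
  intros E.
  assert (Hs : exists rest', Lt t = prefix t x ++ x :: rest').
  { unfold prefix. apply (epsilon_spec (inhabits []) (fun pre => exists rest, Lt t = pre ++ x :: rest)).
    exists pre, rest; auto. }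
  destruct Hs as [rest' E']. symmetry. eapply split_uniq; [|rewrite <- E; exact E'].
  rewrite <- E. apply Lt_NoDup.
Qed.

Definition fstate (x : H) : list Step * list H :=
  fold_left (stepf (top x)) (prefix (top x) x) (Start (top x)).

Definition f (x : H) : UV := (mk (snd (fstate x)) (tau (top x) x) x, fst (fstate x)).

Lemma f_inj x y : f x = f y -> x = y.
Proof. intros E. apply hHinj. apply (f_equal (fun z => snd (fst z))) in E. exact E. Qed.

Definition Inv (t : T) (pre : list H) (st : list Step * list H) : Prop :=
  bagl k (fst st) = map f (snd st) /\
  forall y, B t y -> (top y <> t \/ In y pre) -> In y (snd st).

Lemma tau_sub t pre st x rest : Inv t pre st -> Lt t = pre ++ x :: rest ->
  forall y, In y (tau t x) -> In y (snd st).
Proof.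
  intros [_ I] E y Hy. apply tau_In in Hy. destruct Hy as [By C]. apply I; auto.
  destruct C as [C|C]; auto. right. eapply before_iff; eauto.
Qed.

Lemma filter_len_lt {A} (g : A -> bool) l x : In x l -> g x = false -> length (filter g l) < length l.
Proof.
  induction l as [|a l IH]; simpl; [tauto|]. intros [<-|Hx] Hg.
  - rewrite Hg. pose proof (filter_length_le g l). lia.
  - destruct (g a); simpl; specialize (IH Hx Hg); lia.
Qed.

Lemma tau_len t pre x rest : Lt t = pre ++ x :: rest -> top x = t -> length (tau t x) <= k.
Proof.
  intros E Tx. pose proof (Lt_len t).
  assert (length (tau t x) < length (Lt t)); [|lia].
  unfold tau. apply filter_len_lt with x.
  - rewrite E. apply in_or_app. right. left. auto.
  - cbv beta. destruct (dec (top x <> t \/ before t x x)) eqn:D; auto. apply (proj1 (dec_true _)) in D. exfalso.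
    destruct D as [D|D]; [auto|]. rewrite (before_iff _ _ _ _ _ E) in D.
    pose proof (Lt_NoDup t) as Nd. rewrite E in Nd.
    apply NoDup_remove_2 in Nd. apply Nd. apply in_or_app. auto.
Qed.

Lemma step_bag t pre w s x rest : Inv t pre (w, s) -> Lt t = pre ++ x :: rest -> top x = t ->
  firstn k (sel (map (pos s) (tau t x)) (bagl k w)) = map f (tau t x).
Proof.
  intros I E Tx. destruct I as [I1 I2]. simpl in I1. rewrite I1, sel_map, sel_pos.
  - apply firstn_all2. rewrite length_map. eapply tau_len; eauto.
  - intros y Hy. apply (tau_sub t pre (w, s) x rest); auto. split; auto.
Qed.

Lemma fold_inv t : Inv t [] (Start t) ->
  forall pre rest, Lt t = pre ++ rest -> Inv t pre (fold_left (stepf t) pre (Start t)).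
Proof.
  intros I0 pre. induction pre as [|x pre IH] using rev_ind; intros rest E; auto.
  rewrite <- app_assoc in E. simpl in E.
  specialize (IH (x :: rest) E).
  rewrite fold_left_app. simpl.
  destruct (fold_left (stepf t) pre (Start t)) as [w s] eqn:Ef.
  unfold stepf. simpl. destruct (excluded_middle_informative (top x = t)) as [Tx|Tx].
  - split.
    + simpl. f_equal.
      * unfold f, fstate. rewrite Tx. rewrite (prefix_eq _ _ _ _ E). rewrite Ef. reflexivity.
      * eapply step_bag; eauto.
    + simpl. intros y By C. destruct (classic (y = x)) as [->|Nyx]; [left; auto|right].
      apply tau_In. split; auto. destruct C as [C|C]; auto. right.
      apply (before_iff _ _ _ _ _ E). apply in_app_or in C. destruct C as [C|[C|[]]]; auto.
      congruence.
  - split; [exact (proj1 IH)|]. intros y By C. apply (proj2 IH); auto.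
    destruct C as [C|C]; auto. apply in_app_or in C. destruct C as [C|[C|[]]]; auto.
    subst. auto.
Qed.

Lemma start_inv : forall n t, dist t <= n -> Inv t [] (Start t).
Proof.
  assert (Hr : Inv r [] (Start r)).
  { rewrite Start_r. split; auto. intros y By [C|[]]. exfalso. apply C.
    apply dist0. pose proof (top_min y r By). rewrite dist_r in H0. lia. }
  induction n as [|n IH]; intros t Ht; (destruct (classic (t = r)) as [->|Nr]; [exact Hr|]).
  - exfalso. apply Nr. apply dist0. lia.
  - rewrite Start_par; auto.
    assert (Ip : Inv (par t) (Lt (par t)) (Fin (par t))).
    { apply (fold_inv (par t)) with []; [apply IH; rewrite dist_par; lia| symmetry; apply app_nil_r]. }
    destruct Ip as [I1 I2]. split; auto.
    intros y By [C|[]]. apply I2; [|right; apply Lt_In]; apply Qup; auto.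
Qed.

Lemma inv_at x : exists rest, Lt (top x) = prefix (top x) x ++ x :: rest /\
  Inv (top x) (prefix (top x) x) (fstate x).
Proof.
  assert (Hx : In x (Lt (top x))) by (apply Lt_In, top_in).
  destruct (in_split _ _ Hx) as [pre [rest E]].
  rewrite (prefix_eq _ _ _ _ E). exists rest. split; auto.
  unfold fstate. rewrite (prefix_eq _ _ _ _ E).
  apply fold_inv with (x :: rest); auto. apply (start_inv (dist (top x))). auto.
Qed.

Lemma R_char u y : RU k (f u) y <-> exists v, y = f v /\ In v (tau (top u) u) /\ adj u v.
Proof.
  destruct (inv_at u) as [rest [E I]].
  unfold RU. unfold f at 1. simpl.
  destruct (fstate u) as [w s] eqn:Ef. simpl.
  rewrite (step_bag _ _ _ _ _ _ I E eq_refl), sel_map, sel_pos.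
  - rewrite in_map_iff. split.
    + intros [v [Ev Hv]]. apply filter_In in Hv. destruct Hv as [Hv Ha].
      exists v. split; auto. split; auto. apply dec_true; auto.
    + intros [v [Ev [Hv Ha]]]. exists v. split; auto. apply filter_In. split; auto.
      apply dec_true; auto.
  - intros z Hz. apply filter_In in Hz. tauto.
Qed.

Lemma key u v : B (top u) v -> (top v <> top u \/ before (top u) v u) -> adj u v -> RU k (f u) (f v).
Proof.
  intros Bv C A. apply R_char. exists v. split; auto. split; auto. apply tau_In. auto.
Qed.

Lemma key2 u v : B (top u) v -> adj u v -> RU k (f u) (f v) \/ RU k (f v) (f u).
Proof.
  intros Bv A. destruct (classic (top v = top u)) as [Et|Nt]; [|left; apply key; auto].
  assert (Hu : In u (Lt (top u))) by (apply Lt_In, top_in).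
  destruct (in_split _ _ Hu) as [pre [rest E]].
  assert (Hv : In v (Lt (top u))) by (apply Lt_In; auto).
  rewrite E in Hv. apply in_app_or in Hv. destruct Hv as [Hv|[Hv|Hv]].
  - left. apply key; auto. right. exists pre, rest. auto.
  - subst. exfalso. apply (adj_irrefl _ _ A).
  - right. destruct (in_split _ _ Hv) as [r1 [r2 E2]].
    apply key; auto.
    + rewrite Et. apply top_in.
    + right. rewrite Et. exists (pre ++ u :: r1), r2. split.
      * rewrite E, E2, <- app_assoc. reflexivity.
      * apply in_or_app. right. left. auto.
    + apply adj_sym; auto.
Qed.

Lemma embed : induced_subgraph H (UG k).
Proof.
  exists f. split; [exact f_inj|]. intros u v. split.
  - intros A. split.
    + intros E. apply f_inj in E. subst. apply (adj_irrefl _ _ A).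
    + destruct (proj1 (proj2 HTD) u v A) as [s [Bu Bv]].
      destruct (top_up' u s Bu) as [a Ea]. destruct (top_up' v s Bv) as [b Eb].
      destruct (le_lt_dec a b).
      * apply key2; auto. rewrite <- Ea. apply (above_in v s b); auto.
      * assert (RU k (f v) (f u) \/ RU k (f u) (f v)); [|tauto].
        apply key2; [|apply adj_sym; auto]. rewrite <- Eb. apply (above_in u s a); auto. lia.
  - intros [_ [R1|R1]].
    + apply R_char in R1. destruct R1 as [v' [E [_ A]]]. apply f_inj in E. subst; auto.
    + apply R_char in R1. destruct R1 as [v' [E [_ A]]]. apply f_inj in E. subst.
      apply adj_sym; auto.
Qed.

End Embed.

Theorem mainTheorem13 : forall k : nat,
  exists U : graph, treewidth_le U k /\
    forall H : graph, treewidth_le H k -> induced_subgraph H U.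
Proof.
  intros k. exists (UG k). split; [apply U_tw|].
  intros H [T [B [HTD HW]]]. destruct (countable H) as [h hinj].
  exact (embed k H T B HTD HW h hinj).
Qed.
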